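(* Let $R$ be an $\mathbb{N}$-graded domain and let $F_1,\ldots,F_n$ be a regular sequence of homogeneous elements of $R$ that generate a prime ideal $P$. Let $f_1,\ldots,f_n \in R$ be elements whose leading forms are $F_1,\ldots,F_n$ respectively. Then $f_1,\ldots,f_n$ generate a prime ideal of $R$.
   Context: The leading form of a nonzero element of an $\mathbb{N}$-graded ring is its nonzero homogeneous component of highest degree. *)

(* Defs.v *)
From HB Require Import structures.
From mathcomp Require Import all_boot all_order all_algebra.
Set Implicit Arguments. Unset Strict Implicit. Unset Printing Implicit Defensive.
Import GRing.Theory.
Local Open Scope ring_scope.

Definition is_Ngrading (R : comNzRingType) (hom : nat -> pred R) : Prop :=
  [/\ (forall d, 0 \in hom d),
      (forall d x y, x \in hom d -> y \in hom d -> x - y \in hom d),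
      (forall i j x y, x \in hom i -> y \in hom j -> x * y \in hom (i + j)%N),
      (forall x : R, exists (N : nat) (f : nat -> R),
          (forall d, f d \in hom d) /\ x = \sum_(d < N) f d)
    &
      (forall (N : nat) (f : nat -> R),
          (forall d, f d \in hom d) -> \sum_(d < N) f d = 0 ->
          forall d, (d < N)%N -> f d = 0)].

Definition homogeneous (R : comNzRingType) (hom : nat -> pred R) (x : R) : Prop :=
  exists d, x \in hom d.

Definition leading_form (R : comNzRingType) (hom : nat -> pred R) (x F : R) : Prop :=
  exists (d : nat) (f : nat -> R),
    [/\ (forall i, f i \in hom i), x = \sum_(i < d.+1) f i, f d != 0 & F = f d].

Definition in_ideal_upto (R : comNzRingType) (n k : nat) (F : 'I_n -> R) (x : R) : Prop :=
  exists c : 'I_n -> R, x = \sum_(j < n | (j < k)%N) c j * F j.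

Definition in_ideal (R : comNzRingType) (n : nat) (F : 'I_n -> R) (x : R) : Prop :=
  in_ideal_upto n F x.

Definition regular_sequence (R : comNzRingType) (n : nat) (F : 'I_n -> R) : Prop :=
  (forall (i : 'I_n) (a : R), in_ideal_upto i F (a * F i) -> in_ideal_upto i F a)
  /\ ~ in_ideal F 1.

Definition generates_prime_ideal (R : comNzRingType) (n : nat) (F : 'I_n -> R) : Prop :=
  ~ in_ideal F 1 /\
  (forall a b : R, in_ideal F (a * b) -> in_ideal F a \/ in_ideal F b).

(* Main.v *)
Require Import Defs.
From HB Require Import structures.
From mathcomp Require Import all_boot all_order all_algebra.
From mathcomp Require Import zify ring.
From Stdlib Require Import ClassicalEpsilon.
Set Implicit Arguments. Unset Strict Implicit. Unset Printing Implicit Defensive.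
Import GRing.Theory.
Local Open Scope ring_scope.

Section Grading.
Variables (R : comNzRingType) (hom : nat -> pred R) (G : is_Ngrading hom).

Lemma hom0 d : 0 \in hom d. Proof. by case: G. Qed.
Lemma homB d x y : x \in hom d -> y \in hom d -> x - y \in hom d.
Proof. by case: G => _ H _ _ _; apply: H. Qed.
Lemma homN d x : x \in hom d -> - x \in hom d.
Proof. by move=> hx; rewrite -sub0r; apply: homB => //; apply: hom0. Qed.
Lemma homD d x y : x \in hom d -> y \in hom d -> x + y \in hom d.
Proof. by move=> hx hy; rewrite -[y]opprK; apply: homB => //; apply: homN. Qed.
Lemma homM i j x y : x \in hom i -> y \in hom j -> x * y \in hom (i + j)%N.
Proof. by case: G => _ _ H _ _; apply: H. Qed.

Lemma sum_pad N K (g : nat -> R) : (N <= K)%N ->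
  \sum_(d < N) g d = \sum_(d < K) (if (d < N)%N then g d else 0).
Proof. by move=> hNK; rewrite (big_ord_widen K g hNK) big_mkcond. Qed.

Lemma uniq_dec N M (f g : nat -> R) : (forall d, f d \in hom d) ->
  (forall d, g d \in hom d) -> \sum_(d < N) f d = \sum_(d < M) g d ->
  forall d, (if (d < N)%N then f d else 0) = (if (d < M)%N then g d else 0).
Proof.
move=> hf hg E d.
set h := fun d => (if (d < N)%N then f d else 0) - (if (d < M)%N then g d else 0).
have hh : forall d, h d \in hom d.
  move=> i; rewrite /h; apply: homB; case: ifP => _ //; exact: hom0.
have S0 : \sum_(i < maxn N M) h i = 0.
  rewrite sumrB -!sum_pad ?leq_maxl ?leq_maxr //; by rewrite E subrr.
case: (ltnP d (maxn N M)) => hd.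
  apply/eqP; rewrite -subr_eq0; apply/eqP.
  by case: G => _ _ _ _ HU; apply: (HU _ h hh S0).
rewrite !ifN //; rewrite -leqNgt; apply: leq_trans hd; by rewrite ?leq_maxl ?leq_maxr.
Qed.

Lemma rep_ex (x : R) : exists p : nat * (nat -> R),
  (forall d, p.2 d \in hom d) /\ x = \sum_(d < p.1) p.2 d.
Proof. case: G => _ _ _ H _; case: (H x) => N [f [h1 h2]]; by exists (N, f). Qed.

Definition repx (x : R) := proj1_sig (constructive_indefinite_description _ (rep_ex x)).
Definition comp (d : nat) (x : R) := if (d < (repx x).1)%N then (repx x).2 d else 0.

Lemma repx_spec x : (forall d, (repx x).2 d \in hom d) /\ x = \sum_(d < (repx x).1) (repx x).2 d.
Proof. rewrite /repx; by case: constructive_indefinite_description. Qed.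

Lemma comp_uniq x N (g : nat -> R) : (forall d, g d \in hom d) -> x = \sum_(d < N) g d ->
  forall d, comp d x = if (d < N)%N then g d else 0.
Proof.
move=> hg E d; case: (repx_spec x) => h1 h2; rewrite /comp.
apply: uniq_dec => //; by rewrite -h2.
Qed.

Lemma comp_hom d x : comp d x \in hom d.
Proof. rewrite /comp; case: ifP => _; [by case: (repx_spec x) | exact: hom0]. Qed.

Lemma comp_ex x : exists N, (forall d, (N <= d)%N -> comp d x = 0) /\ x = \sum_(d < N) comp d x.
Proof.
exists (repx x).1; split; first by move=> d hd; rewrite /comp ltnNge hd.
case: (repx_spec x) => _ {1}->; apply: eq_bigr => i _; by rewrite /comp ltn_ord.
Qed.

Lemma comp_ext x N K : (forall d, (N <= d)%N -> comp d x = 0) -> (N <= K)%N ->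
  \sum_(d < N) comp d x = \sum_(d < K) comp d x.
Proof.
move=> hN hK; rewrite (sum_pad (fun d => comp d x) hK); apply: eq_bigr => i _.
case: ifP => // /negbT; rewrite -leqNgt => h; by rewrite hN.
Qed.

Lemma comp_recomp x M : (forall d, (M <= d)%N -> comp d x = 0) -> x = \sum_(d < M) comp d x.
Proof.
move=> hM; case: (comp_ex x) => N [hN {1}->].
by rewrite (comp_ext hN (leq_maxl N M)) -(comp_ext hM (leq_maxr N M)).
Qed.

Lemma comp_homog e x : x \in hom e -> forall d, comp d x = if d == e then x else 0.
Proof.
move=> hx d.
have hg : forall i, (if i == e then x else 0) \in hom i.
  by move=> i; case: eqP => [->|_] //; exact: hom0.
have Ex : x = \sum_(i < e.+1) (if (i:nat) == e then x else 0).
  rewrite big_ord_recr /= eqxx big1 ?add0r // => i _; by rewrite ifN // neq_ltn ltn_ord.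
rewrite (comp_uniq hg Ex).
case: eqP => [->|]; first by rewrite ltnSn.
by move=> hne; case: ifP.
Qed.

Lemma comp0 d : comp d 0 = 0.
Proof. by rewrite (comp_homog (hom0 0)); case: ifP. Qed.

Lemma compD d x y : comp d (x + y) = comp d x + comp d y.
Proof.
case: (comp_ex x) => N1 [h1 _]; case: (comp_ex y) => N2 [h2 _].
set K := maxn N1 N2.
have hg : forall i, comp i x + comp i y \in hom i by move=> i; apply: homD; apply: comp_hom.
rewrite (comp_uniq (N := K) hg); last first.
  rewrite big_split /= -(comp_recomp (M := K) (x := x)) -?(comp_recomp (M := K) (x := y)) //.
  - by move=> i hi; apply: h2; apply: leq_trans hi; apply: leq_maxr.
  - by move=> i hi; apply: h1; apply: leq_trans hi; apply: leq_maxl.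
case: ifP => // /negbT; rewrite -leqNgt => hd.
rewrite h1 ?h2 ?addr0 //; apply: leq_trans hd; by rewrite ?leq_maxl ?leq_maxr.
Qed.

Lemma compN d x : comp d (- x) = - comp d x.
Proof. by apply/eqP; rewrite -addr_eq0 -compD addNr comp0. Qed.
Lemma compB d x y : comp d (x - y) = comp d x - comp d y.
Proof. by rewrite compD compN. Qed.

Lemma comp_sum d (I : Type) (r : seq I) (P : pred I) (Fx : I -> R) :
  comp d (\sum_(i <- r | P i) Fx i) = \sum_(i <- r | P i) comp d (Fx i).
Proof. exact: (big_morph (comp d) (compD d) (comp0 d)). Qed.

Lemma comp_mulr_hom e x y : y \in hom e -> forall d,
  comp d (x * y) = if (e <= d)%N then comp (d - e) x * y else 0.
Proof.
move=> hy d; case: (comp_ex x) => N [hN Ex].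
rewrite {1}Ex mulr_suml comp_sum.
under eq_bigr => i _ do rewrite (comp_homog (homM (comp_hom i x) hy)).
case: leqP => hed.
  rewrite (eq_bigr (fun i : 'I_N => if (i == (d - e)%N :> nat) then comp i x * y else 0)); last first.
    move=> i _; congr (if _ then _ else _); apply/eqP/eqP; lia.
  rewrite -big_mkcond (big_ord1_eq _ (fun i => comp i x * y)); case: ifP => // /negbT; rewrite -leqNgt => h.
  by rewrite hN // mul0r.
rewrite big1 // => i _; rewrite ifN //; apply/eqP; lia.
Qed.

Lemma comp_mul_gen x y M : (forall j, (M <= j)%N -> comp j y = 0) -> forall d,
  comp d (x * y) = \sum_(j < M) (if (j <= d)%N then comp (d - j) x * comp j y else 0).
Proof.
move=> hM d; rewrite {1}(comp_recomp hM) mulr_sumr comp_sum.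
apply: eq_bigr => j _; exact: comp_mulr_hom (comp_hom _ _) _.
Qed.

Definition bnd D x := forall i, (D < i)%N -> comp i x = 0.
Definition bsh D e x := forall i, (D < i + e)%N -> comp i x = 0.

Lemma mul_bnd D e x y : bsh D e x -> bnd e y -> bnd D (x * y).
Proof.
move=> hx hy d hd; rewrite (comp_mul_gen x (M := e.+1)); last by move=> j hj; apply: hy.
rewrite big1 // => j _; case: ifP => // hj.
rewrite hx ?mul0r //; have := ltn_ord j; lia.
Qed.

Lemma mul_top T e x y : bsh T e x -> bnd e y ->
  comp T (x * y) = if (e <= T)%N then comp (T - e) x * comp e y else 0.
Proof.
move=> hx hy; rewrite (comp_mul_gen x (M := e.+1)); last by move=> j hj; apply: hy.
rewrite big_ord_recr /= big1 ?add0r // => j _; case: ifP => // hj.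
rewrite hx ?mul0r //; have := ltn_ord j; lia.
Qed.

Lemma bnd0 D : bnd D 0. Proof. by move=> i _; rewrite comp0. Qed.
Lemma bndB D x y : bnd D x -> bnd D y -> bnd D (x - y).
Proof. by move=> hx hy i hi; rewrite compB hx ?hy ?subr0. Qed.
Lemma bndD D x y : bnd D x -> bnd D y -> bnd D (x + y).
Proof. by move=> hx hy i hi; rewrite compD hx ?hy ?addr0. Qed.
Lemma bnd_mono D D' x : (D <= D')%N -> bnd D x -> bnd D' x.
Proof. move=> h hx i hi; apply: hx; lia. Qed.
Lemma bnd_sum D (I : Type) (r : seq I) (P : pred I) (Fx : I -> R) :
  (forall i, P i -> bnd D (Fx i)) -> bnd D (\sum_(i <- r | P i) Fx i).
Proof. move=> h i hi; rewrite comp_sum big1 // => j Pj; exact: h. Qed.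

Lemma bnd_lower D x : bnd D x -> comp D x = 0 -> x = 0 \/ (0 < D)%N /\ bnd D.-1 x.
Proof.
move=> hx h0; case: D hx h0 => [|D] hx h0.
  left; rewrite (comp_recomp (M := 1) (x := x)); last first.
    by move=> d; case: d => [|d] //= _; apply: hx.
  by rewrite big_ord_recr big_ord0 /= add0r h0.
right; split => // i /= hi; case: (ltngtP i D.+1) => [h|h|->] //.
- lia.
- by apply: hx.
Qed.

Lemma comp1 d : (0 < d)%N -> comp d 1 = 0.
Proof.
move=> hd.
have Hy : forall k y, y \in hom k -> comp d 1 * y = 0.
  move=> k y hy; have := comp_mulr_hom 1 hy (k + d).
  rewrite mul1r leq_addr addKn (comp_homog hy) ifN; first by move<-.
  by rewrite -{2}[k]addn0 eqn_add2l; rewrite -lt0n.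
case: (comp_ex 1) => N [_ E].
by rewrite -[comp d 1]mulr1 {2}E mulr_sumr big1 // => i _; apply: (Hy i); apply: comp_hom.
Qed.

Lemma bnd1 : bnd 0 1. Proof. move=> i hi; exact: comp1. Qed.
Lemma comp01 : comp 0 1 = 1.
Proof.
rewrite {2}(comp_recomp (M := 1) (x := 1)); last by move=> d hd; apply: comp1.
by rewrite big_ord_recr big_ord0 /= add0r.
Qed.

End Grading.

Section Ideals.
Variables (R : comNzRingType) (n : nat).
Implicit Types (H : 'I_n -> R).

Lemma up0 k H : in_ideal_upto k H 0.
Proof. by exists (fun _ => 0); rewrite big1 // => j _; rewrite mul0r. Qed.
Lemma upD k H x y : in_ideal_upto k H x -> in_ideal_upto k H y -> in_ideal_upto k H (x + y).
Proof.
move=> [c1 ->] [c2 ->]; exists (fun j => c1 j + c2 j).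
by rewrite -big_split; apply: eq_bigr => j _; rewrite mulrDl.
Qed.
Lemma upN k H x : in_ideal_upto k H x -> in_ideal_upto k H (- x).
Proof.
move=> [c ->]; exists (fun j => - c j).
by rewrite -sumrN; apply: eq_bigr => j _; rewrite mulNr.
Qed.
Lemma upB k H x y : in_ideal_upto k H x -> in_ideal_upto k H y -> in_ideal_upto k H (x - y).
Proof. by move=> hx hy; apply: upD => //; apply: upN. Qed.
Lemma upM k H r x : in_ideal_upto k H x -> in_ideal_upto k H (r * x).
Proof.
move=> [c ->]; exists (fun j => r * c j).
by rewrite mulr_sumr; apply: eq_bigr => j _; rewrite mulrA.
Qed.
Lemma upS k H (c : 'I_n -> R) : in_ideal_upto k H (\sum_(j < n | (j < k)%N) c j * H j).
Proof. by exists c. Qed.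
Lemma up_mono k k' H x : (k <= k')%N -> in_ideal_upto k H x -> in_ideal_upto k' H x.
Proof.
move=> hk [c ->]; exists (fun j : 'I_n => if (j < k)%N then c j else 0).
rewrite [RHS]big_mkcond [LHS]big_mkcond; apply: eq_bigr => j _.
case: (ltnP j k) => h1; first by rewrite ifT //; lia.
by case: ifP => _; rewrite ?mul0r.
Qed.

Lemma sum_split k (hk : (k < n)%N) (g : 'I_n -> R) :
  \sum_(j < n | (j < k.+1)%N) g j = \sum_(j < n | (j < k)%N) g j + g (Ordinal hk).
Proof.
rewrite (bigD1 (Ordinal hk)) /=; last by [].
rewrite addrC; congr (_ + _); apply: eq_bigl => j.
rewrite -(inj_eq val_inj) /=; case: (ltngtP j k) => h; lia.
Qed.
End Ideals.

Section Main.
Variables (R : comNzRingType) (hom : nat -> pred R) (G : is_Ngrading hom).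
Variables (n : nat) (F f : 'I_n -> R) (e : 'I_n -> nat).
Hypothesis Hf : forall j, bnd G (e j) (f j).
Hypothesis HF : forall j, F j = comp G (e j) (f j).
Hypothesis Hreg : forall (i : 'I_n) a, in_ideal_upto i F (a * F i) -> in_ideal_upto i F a.
Hypothesis Hprime : forall a b : R, in_ideal F (a * b) -> in_ideal F a \/ in_ideal F b.

Local Notation cp := (comp G).

Lemma HFhom j : F j \in hom (e j). Proof. by rewrite HF comp_hom. Qed.

Definition hdef T (g : 'I_n -> R) j := if (e j <= T)%N then cp (T - e j) (g j) else 0.

Lemma bsh_h T g j : bsh G T (e j) (hdef T g j).
Proof.
move=> i hi; rewrite /hdef; case: ifP => h; last by rewrite (comp0 G).
rewrite (comp_homog G (comp_hom G _ _)) ifN //; apply/eqP; lia.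
Qed.

Lemma hdef_idem T g j : hdef T (hdef T g) j = hdef T g j.
Proof. by rewrite /hdef; case: leqP => // h; rewrite (comp_homog G (comp_hom G _ _)) eqxx. Qed.

Lemma topext k T (c : 'I_n -> R) : (forall j : 'I_n, (j < k)%N -> bsh G T (e j) (c j)) ->
  cp T (\sum_(j < n | (j < k)%N) c j * f j) = \sum_(j < n | (j < k)%N) hdef T c j * F j.
Proof.
move=> hc; rewrite (comp_sum G); apply: eq_bigr => j hj.
rewrite (mul_top (hc j hj) (@Hf j)) /hdef -HF; case: ifP => _; by rewrite ?mul0r.
Qed.

Lemma bnd_cf k T (c : 'I_n -> R) : (forall j : 'I_n, (j < k)%N -> bsh G T (e j) (c j)) ->
  bnd G T (\sum_(j < n | (j < k)%N) c j * f j).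
Proof. move=> hc; apply: bnd_sum => j hj; exact: mul_bnd (hc j hj) (@Hf j). Qed.

Lemma graded_ext k T z g : z \in hom T -> z = \sum_(j < n | (j < k)%N) g j * F j ->
  z = \sum_(j < n | (j < k)%N) hdef T g j * F j.
Proof.
move=> hz E; transitivity (cp T z); first by rewrite (comp_homog G hz) eqxx.
rewrite {1}E (comp_sum G); apply: eq_bigr => j _.
rewrite (comp_mulr_hom G _ (HFhom j)) /hdef; case: ifP => _; by rewrite ?mul0r.
Qed.

Lemma SB k : (k <= n)%N -> forall x D, in_ideal_upto k f x -> bnd G D x ->
  exists c : 'I_n -> R, x = \sum_(j < n | (j < k)%N) c j * f j /\
    forall j : 'I_n, (j < k)%N -> bsh G D (e j) (c j).
Proof.
elim: k => [_ | k IH hkn] x D hx hD.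
  case: hx => c Ex; exists c; split => // j; by rewrite ltn0.
set jk := Ordinal hkn.
have IHk := IH (ltnW hkn).
have caseb : forall y c, in_ideal_upto k f y -> x = y + c * f jk -> bsh G D (e jk) c ->
  exists c : 'I_n -> R, x = \sum_(j < n | (j < k.+1)%N) c j * f j /\
    forall j : 'I_n, (j < k.+1)%N -> bsh G D (e j) (c j).
  move=> y c hy Ex hc.
  have hyD : bnd G D y.
    have -> : y = x - c * f jk by rewrite Ex addrK.
    apply: bndB => //; exact: mul_bnd hc (@Hf jk).
  case: (IHk y D hy hyD) => c' [Ey hc'].
  exists (fun j => if j == jk then c else c' j); split.
    rewrite (sum_split hkn) /= -/jk eqxx Ex Ey; congr (_ + _); apply: eq_bigr => j hj.
    rewrite ifN //; apply/eqP => E; by move: hj; rewrite E /= ltnn.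
  move=> j hj; case: eqP => [->|hne] //; apply: hc'.
  have : (j : nat) != k by apply/eqP => E; apply: hne; apply: val_inj.
  move=> /eqP; lia.
case: hx => c0 Ex; rewrite (sum_split hkn) -/jk in Ex.
have hy0 : in_ideal_upto k f (\sum_(j < n | (j < k)%N) c0 j * f j) by exists c0.
case: (comp_ex G (c0 jk)) => m [hm _].
move: hy0 Ex hm; move: (\sum_(j < n | (j < k)%N) c0 j * f j) (c0 jk) => y c.
elim: m y c => [|m IHm] y c hy Ex hm.
  by apply: (caseb y c) => // i _; apply: hm.
case: (ltnP D (m + e jk)) => hDm; last first.
  by apply: (caseb y c) => // i hi; apply: hm; lia.
set T := (m + e jk)%N.
have hcT : bsh G T (e jk) c by move=> i hi; apply: hm; rewrite /T in hi; lia.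
have Ey0 : y = x - c * f jk by rewrite Ex addrK.
have hyT : bnd G T y.
  rewrite Ey0; apply: bndB; [exact: bnd_mono (ltnW hDm) hD | exact: mul_bnd hcT (@Hf jk)].
case: (IHk y T hy hyT) => c' [Ey hc'].
have top : cp T y = - (cp m c * F jk).
  rewrite {1}Ey0 (compB G) (mul_top hcT (@Hf jk)) hD // leq_addl /T addnK -HF sub0r //.
have inF : in_ideal_upto k F (cp m c * F jk).
  rewrite -[_ * _]opprK -top; apply: upN; rewrite {1}Ey (topext hc'); exact: upS.
have [g Eg] : in_ideal_upto k F (cp m c) := Hreg inF.
have Eh := graded_ext (comp_hom G m c) Eg.
set S := \sum_(j < n | (j < k)%N) hdef m g j * f j.
apply: (IHm (y + S * f jk) (c - S)).
- apply: upD hy _; rewrite /S mulr_suml.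
  under eq_bigr => j _ do rewrite mulrAC.
  exact: upS.
- rewrite Ex; ring.
- move=> i hi; case: (ltngtP i m) => h; first lia.
  + rewrite (compB G) hm // (bnd_cf (fun j _ => @bsh_h m g j)) ?subr0 //.
  + rewrite h (compB G) /S (topext (fun j _ => @bsh_h m g j)).
    under eq_bigr => j _ do rewrite hdef_idem.
    by rewrite -Eh subrr.
Qed.

Lemma LF_in x T : in_ideal f x -> bnd G T x -> in_ideal F (cp T x).
Proof.
move=> hx hT; case: (SB (leqnn n) hx hT) => c [Ex hc].
rewrite Ex (topext hc); exact: upS.
Qed.

Lemma red D a : bnd G D a -> in_ideal F (cp D a) ->
  exists a', [/\ bnd G D a', cp D a' = 0 & in_ideal f (a - a')].
Proof.
move=> hD [g Eg]; have Eh := graded_ext (comp_hom G D a) Eg.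
set S := \sum_(j < n | (j < n)%N) hdef D g j * f j.
exists (a - S); split.
- apply: bndB => //; exact: bnd_cf (fun j _ => @bsh_h D g j).
- rewrite (compB G) /S (topext (fun j _ => @bsh_h D g j)).
  under eq_bigr => j _ do rewrite hdef_idem.
  by rewrite -Eh subrr.
- have -> : a - (a - S) = S by ring.
  exact: upS.
Qed.

Lemma half s (IH : forall a b Da Db, (Da + Db < s)%N -> bnd G Da a -> bnd G Db b ->
    in_ideal f (a * b) -> in_ideal f a \/ in_ideal f b) a b Da Db :
  (Da + Db <= s)%N -> bnd G Da a -> bnd G Db b -> in_ideal f (a * b) ->
  in_ideal F (cp Da a) -> in_ideal f a \/ in_ideal f b.
Proof.
move=> hs ha hb hab hA.
case: (red ha hA) => a' [ha' h0 hd].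
have ha'b : in_ideal f (a' * b).
  have -> : a' * b = a * b - b * (a - a') by ring.
  by apply: upB => //; apply: upM.
case: (bnd_lower ha' h0) => [a0 | [hD ha'1]].
  by left; have -> : a = a - a' by rewrite a0 subr0.
case: (IH a' b Da.-1 Db _ ha'1 hb ha'b) => [|ha'I|hbI]; [lia | left | by right].
have -> : a = (a - a') + a' by rewrite subrK.
exact: upD.
Qed.

Lemma step s (IH : forall a b Da Db, (Da + Db < s)%N -> bnd G Da a -> bnd G Db b ->
    in_ideal f (a * b) -> in_ideal f a \/ in_ideal f b) a b Da Db :
  (Da + Db <= s)%N -> bnd G Da a -> bnd G Db b -> in_ideal f (a * b) ->
  in_ideal f a \/ in_ideal f b.
Proof.
move=> hs ha hb hab.
have hsh : bsh G (Da + Db) Db a by move=> i hi; apply: ha; lia.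
have hAB : in_ideal F (cp Da a * cp Db b).
  have <- : cp (Da + Db) (a * b) = cp Da a * cp Db b.
    by rewrite (mul_top hsh hb) leq_addl addnK.
  exact: LF_in hab (mul_bnd hsh hb).
case: (Hprime hAB) => h.
  by have := half IH hs ha hb hab; apply.
have hba : in_ideal f (b * a) by rewrite mulrC.
have := half IH (a := b) (b := a) (Da := Db) (Db := Da) _ hb ha hba h.
rewrite addnC => H; by case: (H hs); [right | left].
Qed.

Lemma prime_main s a b Da Db : (Da + Db <= s)%N -> bnd G Da a -> bnd G Db b ->
  in_ideal f (a * b) -> in_ideal f a \/ in_ideal f b.
Proof.
elim: s a b Da Db => [|s IH] a b Da Db.
  apply: step => a' b' Da' Db' h; lia.
apply: step => a' b' Da' Db' h; apply: IH; lia.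
Qed.

End Main.

Unset Implicit Arguments.
Set Strict Implicit.

Theorem mainTheorem14 (R : idomainType) (hom : nat -> pred R)
    (n : nat) (F f : 'I_n -> R) :
  is_Ngrading hom ->
  (forall i, homogeneous hom (F i)) ->
  regular_sequence F ->
  generates_prime_ideal F ->
  (forall i, leading_form hom (f i) (F i)) ->
  generates_prime_ideal f.
Proof.
move=> G _ [Hreg _] [HF1 Hprime] Hlf.
have : forall i, exists d, bnd G d (f i) /\ F i = comp G d (f i).
  move=> i; case: (Hlf i) => d [g [hg Ef hd EF]]; exists d; split.
    move=> m hm; rewrite (comp_uniq G hg Ef) ifN //; by rewrite ltnS -ltnNge.
  by rewrite (comp_uniq G hg Ef) ltnSn.
case/fin_all_exists => e He.
have Hf : forall j, bnd G (e j) (f j) by move=> j; case: (He j).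
have HF : forall j, F j = comp G (e j) (f j) by move=> j; case: (He j).
split.
  move=> h1; apply: HF1; rewrite -(comp01 G); exact: (LF_in Hf HF Hreg h1 (bnd1 G)).
move=> a b hab.
case: (comp_ex G a) => Na [ha _]; case: (comp_ex G b) => Nb [hb _].
apply: (prime_main Hf HF Hreg Hprime (s := (Na + Nb)%N) (Da := Na) (Db := Nb)) => //.
- by move=> i hi; apply: ha; apply: ltnW.
- by move=> i hi; apply: hb; apply: ltnW.
Qed.
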